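(* For every circuit $c\in\mathsf{ACirc}$, $[\![c]\!]_{op}=\kappa(\iota([\![c]\!]))$.
   Context: Fix a field $k$. Circuits: terms built from generators with sorts: copier $\Delta:(1,2)$, discard $!:(1,0)$, amplifier $\mathsf{s}_r:(1,1)$ ($r\in k$), register $\mathsf{x}:(1,1)$, adder $+:(2,1)$, zero $0:(0,1)$, one $\mathbf{1}:(0,1)$; mirror images $\Delta^{op}:(2,1)$, $!^{op}:(0,1)$, $\mathsf{s}_r^{op}$, $\mathsf{x}^{op}:(1,1)$, $+^{op}:(1,2)$, $0^{op}:(1,0)$, $\mathbf{1}^{op}:(1,0)$; $\mathrm{id}_0:(0,0)$, $\mathrm{id}_1:(1,1)$, $\mathrm{sw}:(2,2)$; closed under sequential composition $;$ and parallel composition $\oplus$; $\mathsf{ACirc}$ is the resulting prop (modulo symmetric monoidal laws). Denotation: $k(x)$ is the field of polynomial fractions over $k$; $[\![c]\!]\subseteq k(x)^n\times k(x)^m$ with $[\![\Delta]\!]=\{(p,(p,p))\}$, $[\![!]\!]=\{(p,\bullet)\}$, $[\![+]\!]=\{((p,q),p+q)\}$, $[\![0]\!]=\{(\bullet,0)\}$, $[\![\mathbf 1]\!]=\{(\bullet,1)\}$, $[\![\mathsf s_r]\!]=\{(p,rp)\}$, $[\![\mathsf x]\!]=\{(p,px)\}$; mirrored generators denote converse relations; $\mathrm{id}_1,\mathrm{sw},\mathrm{id}_0$ denote identity, swap, $\{(\bullet,\bullet)\}$; $;$ is relational composition and $\oplus$ product of relations. Each $[\![c]\!]$ is an affine relation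 (empty, or a translate of a $k(x)$-linear subspace). Operational semantics: states are circuits with a value of $k$ in each register; initial state $c_0$ stores $0$. Transitions $t\vdash c\xrightarrow[w]{v}c'$ at time $t\in\mathbb Z$: $\Delta$: $a/(a,a)$; $!$: $a/\bullet$; $+$: $(a,b)/a+b$; $0$: $\bullet/0$; $\mathsf s_r$: $a/ra$; $\mathsf x$ storing $b$: $a/b$, then stores $a$; $\mathbf 1$: $\bullet/1$ if $t=0$, $\bullet/0$ if $t\ne0$; mirrored generators: same with left/right exchanged; $\mathrm{id}_1$: $a/a$; $\mathrm{sw}$: $(a,b)/(b,a)$; $\mathrm{id}_0$: $\bullet/\bullet$; in $c;d$ the components move at the same time agreeing on the shared middle label; in $c\oplus d$ they move at the same time with labels concatenated. A computation starting at $t\le 0$ is a sequence of transitions from $c_0$ at times $t,t+1,\dots$. An $(n,m)$-trajectory is $\sigma:\mathbb Z\to k^n\times k^m$ that is $(0,0)$ for all sufficiently small indices. $[\![c]\!]_{op}$ is the set of trajectories of infinite computations: $\sigma(i)=(u_i,v_i)$ (labels of the transition at time $i$) for $i\ge t$, and $(0,0)$ for $i<t$. Laurent series: $k((x))$ is the field of maps $\alpha:\mathbb Z\to k$ with $\alpha(i)=0$ for all sufficiently small $i$, pointwise sum and convolution product; $k(x)$ embeds in $k((x))$ (a polynomial as its coefficient sequence, fractions via inverses in $k((x))$). $\iota$ sends $\emptyset$ to $\emptyset$ and an affine relation $a+L\subseteq k(x)^n\times k(x)^m$ to the affine relation $a+\mathrm{span}_{k((x))}(L)\subseteq k((x))^n\times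 k((x))^m$ (via the embedding). $\kappa$ sends a pair $(u,v)$, $u=(\alpha^1,\dots,\alpha^n)\in k((x))^n$, $v=(\beta^1,\dots,\beta^m)\in k((x))^m$, to the trajectory $i\mapsto((\alpha^1(i),\dots,\alpha^n(i)),(\beta^1(i),\dots,\beta^m(i)))$, and is extended to sets elementwise. *)

(* Defs.v *)
From HB Require Import structures.
From mathcomp Require Import all_boot all_order all_algebra.
From mathcomp Require Import fraction.
From Stdlib Require Import ClassicalEpsilon.
Set Implicit Arguments. Unset Strict Implicit. Unset Printing Implicit Defensive.
Import Order.TTheory GRing.Theory Num.Theory.
Local Open Scope ring_scope.

Inductive circ (k : fieldType) : nat -> nat -> Type :=
| CCopy : circ k 1 2
| CDisc : circ k 1 0
| CAmp (r : k) : circ k 1 1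
| CReg : circ k 1 1
| CAdd : circ k 2 1
| CZero : circ k 0 1
| COne : circ k 0 1
| CCopyOp : circ k 2 1
| CDiscOp : circ k 0 1
| CAmpOp (r : k) : circ k 1 1
| CRegOp : circ k 1 1
| CAddOp : circ k 1 2
| CZeroOp : circ k 1 0
| COneOp : circ k 1 0
| CId0 : circ k 0 0
| CId1 : circ k 1 1
| CSw : circ k 2 2
| CSeq n m l : circ k n m -> circ k m l -> circ k n l
| CPar n1 m1 n2 m2 : circ k n1 m1 -> circ k n2 m2 -> circ k (n1 + n2) (m1 + m2).

Definition kx (k : fieldType) := {fraction {poly k}}.

Definition polyF (k : fieldType) (p : {poly k}) : kx k := FracField.tofrac p.

Definition krel (k : fieldType) n m := 'rV[kx k]_n -> 'rV[kx k]_m -> Prop.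

Fixpoint denot (k : fieldType) n m (c : circ k n m) : krel k n m :=
  match c in circ _ n m return krel k n m with
  | CCopy => fun u v => v = \row_(j < 2) u 0 0
  | CDisc => fun u v => True
  | CAmp r => fun u v => v = polyF r%:P *: u
  | CReg => fun u v => v = polyF 'X *: u
  | CAdd => fun u v => v = \row_(j < 1) (u 0 ord0 + u 0 ord_max)
  | CZero => fun u v => v = 0
  | COne => fun u v => v = const_mx 1
  | CCopyOp => fun u v => u = \row_(j < 2) v 0 0
  | CDiscOp => fun u v => True
  | CAmpOp r => fun u v => u = polyF r%:P *: v
  | CRegOp => fun u v => u = polyF 'X *: v
  | CAddOp => fun u v => u = \row_(j < 1) (v 0 ord0 + v 0 ord_max)
  | CZeroOp => fun u v => u = 0
  | COneOp => fun u v => u = const_mx 1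
  | CId0 => fun u v => True
  | CId1 => fun u v => v = u
  | CSw => fun u v => v = \row_(j < 2) u 0 (rev_ord j)
  | CSeq _ _ _ c d => fun u v => exists w, denot c u w /\ denot d w v
  | CPar _ _ _ _ c d => fun u v =>
      denot c (lsubmx u) (lsubmx v) /\ denot d (rsubmx u) (rsubmx v)
  end.

Fixpoint stateT (k : fieldType) n m (c : circ k n m) : Type :=
  match c with
  | CReg => k
  | CRegOp => k
  | CSeq _ _ _ c d => (stateT c * stateT d)%type
  | CPar _ _ _ _ c d => (stateT c * stateT d)%type
  | _ => unit
  end.

Fixpoint init (k : fieldType) n m (c : circ k n m) : stateT c :=
  match c as c0 in circ _ n m return stateT c0 with
  | CReg => 0
  | CRegOp => 0
  | CSeq _ _ _ c d => (init c, init d)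
  | CPar _ _ _ _ c d => (init c, init d)
  | CCopy => tt | CDisc => tt | CAmp _ => tt | CAdd => tt
  | CZero => tt | COne => tt | CCopyOp => tt | CDiscOp => tt
  | CAmpOp _ => tt | CAddOp => tt | CZeroOp => tt | COneOp => tt
  | CId0 => tt | CId1 => tt | CSw => tt
  end.

Definition one_at (k : fieldType) (t : int) : k := if t == 0 then 1 else 0.

(* step t c s u v s' :  t |- c (state s) --u/v--> c (state s') *)
Fixpoint step (k : fieldType) (t : int) n m (c : circ k n m) :
    stateT c -> 'rV[k]_n -> 'rV[k]_m -> stateT c -> Prop :=
  match c as c0 in circ _ n m
    return stateT c0 -> 'rV[k]_n -> 'rV[k]_m -> stateT c0 -> Prop with
  | CCopy => fun _ u v _ => v = \row_(j < 2) u 0 0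
  | CDisc => fun _ u v _ => True
  | CAmp r => fun _ u v _ => v = r *: u
  | CReg => fun b u v b' => v = const_mx b /\ b' = u 0 0
  | CAdd => fun _ u v _ => v = \row_(j < 1) (u 0 ord0 + u 0 ord_max)
  | CZero => fun _ u v _ => v = 0
  | COne => fun _ u v _ => v = const_mx (one_at k t)
  | CCopyOp => fun _ u v _ => u = \row_(j < 2) v 0 0
  | CDiscOp => fun _ u v _ => True
  | CAmpOp r => fun _ u v _ => u = r *: v
  | CRegOp => fun b u v b' => u = const_mx b /\ b' = v 0 0
  | CAddOp => fun _ u v _ => u = \row_(j < 1) (v 0 ord0 + v 0 ord_max)
  | CZeroOp => fun _ u v _ => u = 0
  | COneOp => fun _ u v _ => u = const_mx (one_at k t)
  | CId0 => fun _ u v _ => True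
  | CId1 => fun _ u v _ => v = u
  | CSw => fun _ u v _ => v = \row_(j < 2) u 0 (rev_ord j)
  | CSeq _ _ _ c d => fun s u v s' =>
      exists w, @step k t _ _ c s.1 u w s'.1 /\ @step k t _ _ d s.2 w v s'.2
  | CPar _ _ _ _ c d => fun s u v s' =>
      @step k t _ _ c s.1 (lsubmx u) (lsubmx v) s'.1 /\
      @step k t _ _ d s.2 (rsubmx u) (rsubmx v) s'.2
  end.

Definition trajectory (k : fieldType) n m := int -> 'rV[k]_n * 'rV[k]_m.

Definition op_sem (k : fieldType) n m (c : circ k n m) (sigma : trajectory k n m)
  : Prop :=
  exists (t : int) (st : int -> stateT c),
    t <= 0 /\ st t = init c /\
    (forall i : int, t <= i -> @step k i _ _ c (st i) (sigma i).1 (sigma i).2 (st (i + 1))) /\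
    (forall i : int, i < t -> sigma i = (0, 0)).

Definition laurent (k : fieldType) (a : int -> k) : Prop :=
  exists N : int, forall i : int, i < N -> a i = 0.

(* a lower bound below which a Laurent series vanishes (0 if none) *)
Definition lbound (k : fieldType) (a : int -> k) : int :=
  match excluded_middle_informative
          (exists N : int, forall i : int, i < N -> a i = 0) with
  | left H => proj1_sig (constructive_indefinite_description _ H)
  | right _ => 0
  end.

Definition ladd (k : fieldType) (a b : int -> k) : int -> k := fun i => a i + b i.

(* convolution product: (a b)(n) = sum_i a(i) b(n - i), a finite sum *)
Definition lmul (k : fieldType) (a b : int -> k) : int -> k := fun n =>
  let la := lbound a in let lb := lbound b in
  \sum_(j < (absz (n - la - lb)%R).+1 | 0 <= n - la - lb)
     a (la + j%:Z) * b (n - la - j%:Z).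

Definition pcoef (k : fieldType) (p : {poly k}) : int -> k := fun i =>
  match i with Posz n => p`_n | Negz _ => 0 end.

(* embedding k(x) -> k((x)) (as its graph): f = p/q is sent to the
   Laurent series e with e * q = p, i.e. p * q^{-1} in k((x)). *)
Definition embR (k : fieldType) (f : kx k) (e : int -> k) : Prop :=
  laurent e /\
  exists p q : {poly k}, q != 0 /\ f = polyF p / polyF q /\
                         lmul e (pcoef q) = pcoef p.

Definition lvec (k : fieldType) n := 'I_n -> int -> k.

Definition embV (k : fieldType) n (a : 'rV[kx k]_n) (e : lvec k n) : Prop :=
  forall j, embR (a 0 j) (e j).

Definition lcomb (k : fieldType) n N (e : lvec k n) (lam : 'I_N -> int -> k)
  (l : 'I_N -> lvec k n) : lvec k n :=
  fun j t => e j t + \sum_(i < N) lmul (lam i) (l i j) t.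

(* iota : S = a + L  |->  a + span_{k((x))}(L), and emptyset |-> emptyset.
   Here a is any point of S and L = S - a. *)
Definition iota_rel (k : fieldType) n m (S : krel k n m) :
    lvec k n -> lvec k m -> Prop := fun u v =>
  exists (a1 : 'rV[kx k]_n) (a2 : 'rV[kx k]_m), S a1 a2 /\
  exists (N : nat) (lam : 'I_N -> int -> k)
         (l1 : 'I_N -> 'rV[kx k]_n) (l2 : 'I_N -> 'rV[kx k]_m),
    (forall i, laurent (lam i)) /\
    (forall i, exists s1 s2, S s1 s2 /\ l1 i = s1 - a1 /\ l2 i = s2 - a2) /\
    exists (e1 : lvec k n) (e2 : lvec k m)
           (f1 : 'I_N -> lvec k n) (f2 : 'I_N -> lvec k m),
      embV a1 e1 /\ embV a2 e2 /\
      (forall i, embV (l1 i) (f1 i)) /\ (forall i, embV (l2 i) (f2 i)) /\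
      u = lcomb e1 lam f1 /\ v = lcomb e2 lam f2.

Definition kappa (k : fieldType) n m (u : lvec k n) (v : lvec k m) : trajectory k n m :=
  fun i => (\row_(j < n) u j i, \row_(j < m) v j i).

Definition kappa_set (k : fieldType) n m (T : lvec k n -> lvec k m -> Prop) :
    trajectory k n m -> Prop :=
  fun sigma => exists u v, T u v /\ sigma = kappa u v.

(* Main.v *)
Require Import Defs.
From HB Require Import structures.
From mathcomp Require Import all_boot all_order all_algebra.
From mathcomp Require Import fraction.
From mathcomp Require Import zify ring.
From mathcomp Require Import boolp.
From Stdlib Require Import ClassicalEpsilon.
Set Implicit Arguments. Unset Strict Implicit. Unset Printing Implicit Defensive.
Import Order.TTheory GRing.Theory Num.Theory.
Local Open Scope ring_scope.

Section Laurent.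
Variable k : fieldType.
Implicit Types a b : int -> k.

Definition vanish a (A : int) := forall i : int, i < A -> a i = 0.

Lemma lboundP a : laurent a -> vanish a (lbound a).
Proof.
move=> H; rewrite /lbound; case: excluded_middle_informative => // H'.
by case: (constructive_indefinite_description _ H') => N /=.
Qed.

Definition lsum a b (A B n : int) : k :=
  \sum_(j < (absz (n - A - B)%R).+1 | 0 <= n - A - B) a (A + j%:Z) * b (n - A - j%:Z).

Lemma lmulE a b n : lmul a b n = lsum a b (lbound a) (lbound b) n.
Proof. by []. Qed.

Lemma big_cpred (N : nat) (P : bool) (F : 'I_N -> k) :
  \sum_(j < N | P) F j = if P then \sum_(j < N) F j else 0.
Proof. by case: P; rewrite ?big_pred0_eq. Qed.

Lemma lsum_decA a b A B n : vanish a A ->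
  lsum a b A B n = lsum a b (A - 1) B n.
Proof.
move=> Ha; rewrite /lsum big_cpred [RHS]big_cpred.
have E : n - (A - 1) - B = (n - A - B) + 1 by ring.
rewrite E.
case: (lerP 0 (n - A - B)) => h.
  have h1 : 0 <= n - A - B + 1 by lia.
  rewrite h1.
  have -> : absz (n - A - B + 1)%R = (absz (n - A - B)%R).+1 by lia.
  rewrite [RHS]big_ord_recl /= Ha ?mul0r ?add0r; last by rewrite /=; lia.
  apply: eq_bigr => j _; congr (a _ * b _); rewrite /bump /=; lia.
case: (lerP 0 (n - A - B + 1)) => h1 //.
have -> : absz (n - A - B + 1)%R = 0%N by lia.
by rewrite big_ord1 Ha ?mul0r //=; lia.
Qed.

Lemma lsum_decB a b A B n : vanish b B ->
  lsum a b A B n = lsum a b A (B - 1) n.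
Proof.
move=> Hb; rewrite /lsum big_cpred [RHS]big_cpred.
have E : n - A - (B - 1) = (n - A - B) + 1 by ring.
rewrite E.
case: (lerP 0 (n - A - B)) => h.
  have h1 : 0 <= n - A - B + 1 by lia.
  rewrite h1.
  have -> : absz (n - A - B + 1)%R = (absz (n - A - B)%R).+1 by lia.
  rewrite [RHS]big_ord_recr /= Hb ?mulr0 ?addr0 //; lia.
case: (lerP 0 (n - A - B + 1)) => h1 //.
have -> : absz (n - A - B + 1)%R = 0%N by lia.
by rewrite big_ord1 Hb ?mulr0 //=; lia.
Qed.

Lemma vanish_le a A A' : A' <= A -> vanish a A -> vanish a A'.
Proof. by move=> h H i hi; apply: H; lia. Qed.

Lemma lsum_shiftA a b A B n (d : nat) : vanish a A ->
  lsum a b A B n = lsum a b (A - d%:Z) B n.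
Proof.
move=> Ha; elim: d => [|d IH]; first by rewrite subr0.
rewrite IH (lsum_decA _ _ _ (vanish_le _ Ha)); last by lia.
by congr lsum; lia.
Qed.

Lemma lsum_shiftB a b A B n (d : nat) : vanish b B ->
  lsum a b A B n = lsum a b A (B - d%:Z) n.
Proof.
move=> Hb; elim: d => [|d IH]; first by rewrite subr0.
rewrite IH (lsum_decB _ _ _ (vanish_le _ Hb)); last by lia.
by congr lsum; lia.
Qed.

Lemma lsum_indep a b A A' B B' n : vanish a A -> vanish a A' ->
  vanish b B -> vanish b B' -> lsum a b A B n = lsum a b A' B' n.
Proof.
move=> Ha Ha' Hb Hb'.
have eA : forall A1 A2, vanish a A1 -> A2 <= A1 -> lsum a b A1 B n = lsum a b A2 B n.
  move=> A1 A2 H1 le; rewrite (lsum_shiftA _ _ _ (absz (A1 - A2)%R) H1).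
  by congr lsum; lia.
have eB : forall B1 B2, vanish b B1 -> B2 <= B1 -> lsum a b A' B1 n = lsum a b A' B2 n.
  move=> B1 B2 H1 le; rewrite (lsum_shiftB _ _ _ (absz (B1 - B2)%R) H1).
  by congr lsum; lia.
have -> : lsum a b A B n = lsum a b A' B n.
  case: (lerP A' A) => h; first exact: eA.
  by rewrite (eA A' A) //; apply: ltW.
case: (lerP B' B) => h; first exact: eB.
by rewrite (eB B' B) //; apply: ltW.
Qed.

Lemma vanish_laurent a A : vanish a A -> laurent a.
Proof. by move=> H; exists A. Qed.

Lemma lmul_lsum a b A B n : vanish a A -> vanish b B -> lmul a b n = lsum a b A B n.
Proof.
move=> Ha Hb; rewrite lmulE; apply: lsum_indep => //;
  apply: lboundP; apply: vanish_laurent; eassumption.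
Qed.

Lemma lmul_neg a b A B n : vanish a A -> vanish b B -> n - A - B < 0 -> lmul a b n = 0.
Proof.
move=> Ha Hb h; rewrite (lmul_lsum _ Ha Hb) /lsum big_cpred.
by case: lerP => //; lia.
Qed.

Lemma lmul_vanish a b A B : vanish a A -> vanish b B -> vanish (lmul a b) (A + B).
Proof. by move=> Ha Hb i hi; apply: (lmul_neg Ha Hb); lia. Qed.

Definition trunc a (A : int) (M : nat) : {poly k} := \poly_(j < M) a (A + j%:Z).

Lemma lmul_poly a b A B n (M : nat) : vanish a A -> vanish b B ->
  0 <= n - A - B -> (absz (n - A - B)%R < M)%N ->
  lmul a b n = (trunc a A M * trunc b B M)`_(absz (n - A - B)%R).
Proof.
move=> Ha Hb h hM; rewrite (lmul_lsum _ Ha Hb) /lsum big_cpred h coefM.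
apply: eq_bigr => j _; rewrite !coef_poly.
have hj : (j < M)%N by have := ltn_ord j; lia.
have hj' : ((absz (n - A - B)%R - j) < M)%N by lia.
rewrite hj hj'; congr (a _ * b _).
by move: (ltn_ord j); move: (nat_of_ord j) => jj hjj; lia.
Qed.

Lemma trunc_coef (P Q : {poly k}) (M i : nat) : (i < M)%N ->
  ((\poly_(j < M) P`_j) * Q)`_i = (P * Q)`_i.
Proof.
move=> hi; rewrite !coefM; apply: eq_bigr => j _; rewrite coef_poly.
by have := ltn_ord j; case: ifP => //; lia.
Qed.

Lemma lmul_poly' a b A B n (M i : nat) : vanish a A -> vanish b B ->
  n = A + B + i%:Z -> (i < M)%N ->
  lmul a b n = (trunc a A M * trunc b B M)`_i.
Proof.
move=> Ha Hb hn hi.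
have h : 0 <= n - A - B by lia.
have -> : i = absz (n - A - B)%R by lia.
by apply: lmul_poly => //; lia.
Qed.

Lemma laurent_add a b : laurent a -> laurent b -> laurent (ladd a b).
Proof.
move=> [A Ha] [B Hb]; exists (Num.min A B) => i hi.
by rewrite /ladd Ha ?Hb ?addr0 //; move: hi; rewrite lt_min => /andP[].
Qed.

Lemma laurent_opp a : laurent a -> laurent (fun i => - a i).
Proof. by move=> [A Ha]; exists A => i hi; rewrite Ha ?oppr0. Qed.

Lemma laurent_mul a b : laurent a -> laurent b -> laurent (lmul a b).
Proof. by move=> [A Ha] [B Hb]; exists (A + B); apply: lmul_vanish. Qed.

Lemma laurent_pcoef (p : {poly k}) : laurent (pcoef p).
Proof. by exists 0 => -[n|n] //. Qed.

Lemma laurent0 : laurent (fun _ : int => (0 : k)).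
Proof. by exists 0. Qed.

Record laur := Laur { lf : int -> k ; lfP : laurent lf }.

Lemma laur_eq (x y : laur) : lf x = lf y -> x = y.
Proof.
case: x => f Hf; case: y => g Hg /= e; subst g.
by rewrite (Prop_irrelevance Hf Hg).
Qed.

HB.instance Definition _ := gen_eqMixin laur.
HB.instance Definition _ := gen_choiceMixin laur.

Definition l0 := Laur laurent0.
Definition l1 := Laur (laurent_pcoef 1).
Definition ladd_ (x y : laur) := Laur (laurent_add (lfP x) (lfP y)).
Definition lopp_ (x : laur) := Laur (laurent_opp (lfP x)).
Definition lmul_ (x y : laur) := Laur (laurent_mul (lfP x) (lfP y)).

Lemma lv (x : laur) : vanish (lf x) (lbound (lf x)).
Proof. exact: lboundP (lfP x). Qed.
Arguments lv : clear implicits.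

Lemma laddA : associative ladd_.
Proof. by move=> x y z; apply: laur_eq; apply: funext => i; rewrite /= /ladd addrA. Qed.
Lemma laddC : commutative ladd_.
Proof. by move=> x y; apply: laur_eq; apply: funext => i; rewrite /= /ladd addrC. Qed.
Lemma ladd0 : left_id l0 ladd_.
Proof. by move=> x; apply: laur_eq; apply: funext => i; rewrite /= /ladd add0r. Qed.
Lemma laddN : left_inverse l0 lopp_ ladd_.
Proof. by move=> x; apply: laur_eq; apply: funext => i; rewrite /= /ladd addNr. Qed.

HB.instance Definition _ := GRing.isZmodule.Build laur laddA laddC ladd0 laddN.

Lemma lmulA : associative lmul_.
Proof.
move=> x y z; apply: laur_eq; apply: funext => n /=.
have Hx := lv x; have Hy := lv y; have Hz := lv z.
set A := lbound (lf x) in Hx *; set B := lbound (lf y) in Hy *;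
set C := lbound (lf z) in Hz *.
clearbody A B C.
have Hxy := lmul_vanish Hx Hy; have Hyz := lmul_vanish Hy Hz.
case: (ltrP (n - A - B - C) 0) => hs.
  rewrite (lmul_neg Hx Hyz) ?(lmul_neg Hxy Hz) //; lia.
have [i hi] : exists i : nat, n - A - B - C = i%:Z by exists (absz (n - A - B - C)%R); lia.
pose M := i.+1.
rewrite (lmul_poly' (i := i) (M := M) Hx Hyz); [|lia|by []].
rewrite (lmul_poly' (i := i) (M := M) Hxy Hz); [|lia|by []].
have -> : trunc (lmul (lf x) (lf y)) (A + B) M = \poly_(j < M) (trunc (lf x) A M * trunc (lf y) B M)`_j.
  by apply: eq_poly => j hj; apply: (lmul_poly' Hx Hy).
have -> : trunc (lmul (lf y) (lf z)) (B + C) M = \poly_(j < M) (trunc (lf y) B M * trunc (lf z) C M)`_j.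
  by apply: eq_poly => j hj; apply: (lmul_poly' Hy Hz) => //; lia.
by rewrite trunc_coef // mulrC trunc_coef // mulrC mulrA.
Qed.

Lemma lmulC : commutative lmul_.
Proof.
move=> x y; apply: laur_eq; apply: funext => n /=.
have Hx := lv x; have Hy := lv y.
set A := lbound (lf x) in Hx *; set B := lbound (lf y) in Hy *.
clearbody A B.
case: (ltrP (n - A - B) 0) => hs.
  rewrite (lmul_neg Hx Hy) ?(lmul_neg Hy Hx) //; lia.
have [i hi] : exists i : nat, n - A - B = i%:Z by exists (absz (n - A - B)%R); lia.
rewrite (lmul_poly' (i := i) (M := i.+1) Hx Hy); [|lia|by []].
rewrite (lmul_poly' (i := i) (M := i.+1) Hy Hx); [|lia|by []].
by rewrite mulrC.
Qed.

Lemma pcoefE (p : {poly k}) (m : nat) : pcoef p m%:Z = p`_m.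
Proof. by []. Qed.

Lemma lmul1 : left_id l1 lmul_.
Proof.
move=> x; apply: laur_eq; apply: funext => n /=.
have Hx := lv x; set A := lbound (lf x) in Hx *.
clearbody A.
have H1 : vanish (pcoef 1) 0 by move=> -[m|m].
rewrite (lmul_lsum _ H1 Hx) /lsum big_cpred.
case: lerP => h; last by rewrite Hx //; lia.
rewrite big_ord_recl big1 ?addr0.
  by rewrite (pcoefE 1 0) coef1 mul1r.
move=> j _; rewrite add0r (pcoefE 1) coef1 /=.
by rewrite mul0r.
Qed.

Lemma lmulDl : left_distributive lmul_ ladd_.
Proof.
move=> x y z; apply: laur_eq; apply: funext => n /=.
have Hx := lv x; have Hy := lv y; have Hz := lv z.
set A := lbound (lf x) in Hx *; set B := lbound (lf y) in Hy *;
set C := lbound (lf z) in Hz *.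
clearbody A B C.
pose D := Num.min A B.
have HxD : vanish (lf x) D by apply: vanish_le Hx; rewrite /D ge_min lexx.
have HyD : vanish (lf y) D by apply: vanish_le Hy; rewrite /D ge_min lexx orbT.
have HxyD : vanish (ladd (lf x) (lf y)) D by move=> i hi; rewrite /ladd HxD ?HyD ?addr0.
rewrite /ladd (lmul_lsum _ HxyD Hz) (lmul_lsum _ HxD Hz) (lmul_lsum _ HyD Hz) /lsum !big_cpred.
case: ifP => _; last by rewrite !big_pred0_eq addr0.
by rewrite -big_split; apply: eq_bigr => j _; rewrite /ladd mulrDl.
Qed.

Lemma l1_neq0 : l1 != l0.
Proof.
apply/eqP => /(congr1 (fun x => lf x 0)) /=.
by rewrite coef1 /= => /eqP; rewrite oner_eq0.
Qed.

HB.instance Definition _ := GRing.Zmodule_isComNzRing.Build laur lmulA lmulC lmul1 lmulDl l1_neq0.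

Section Binv.
Variable f : nat -> k.
Fixpoint binv (fuel n : nat) : k :=
  if fuel is fu.+1 then
    (if n is 0 then (f 0)^-1 else - (f 0)^-1 * \sum_(j < n) binv fu j * f (n - j)%N)
  else 0.

Lemma binv_fuel fu1 fu2 n : (n < fu1)%N -> (n < fu2)%N -> binv fu1 n = binv fu2 n.
Proof.
elim: fu1 fu2 n => [|fu1 IH] [|fu2] n //= h1 h2.
case: n h1 h2 => //= n h1 h2; congr (_ * _); apply: eq_bigr => j _; congr (_ * _).
by apply: IH; have := ltn_ord j; lia.
Qed.

Definition bser n := binv n.+1 n.

Lemma bser_eq n : f 0 != 0 ->
  \sum_(j < n.+1) bser j * f (n - j)%N = (n == 0)%:R.
Proof.
move=> f0; case: n => [|m]; first by rewrite big_ord1 /bser /= mulVf.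
rewrite big_ord_recr /= /bser /= subnn.
have -> : \sum_(i < m.+1) binv i.+1 i * f (m.+1 - i)%N =
          \sum_(i < m.+1) binv m.+1 i * f (m.+1 - i)%N.
  by apply: eq_bigr => j _; congr (_ * _); apply: binv_fuel => //; have := ltn_ord j; lia.
by rewrite mulrAC mulNr mulVf // mulN1r subrr.
Qed.
End Binv.

Lemma laur_neq0 (x : laur) : x != 0 -> exists i, lf x i != 0.
Proof.
move=> hx; case: (pselect (exists i, lf x i != 0)) => // H; exfalso.
move/eqP: hx; apply; apply: laur_eq; apply: funext => i /=.
by apply/eqP; apply/negPn/negP => hi; apply: H; exists i.
Qed.

Lemma lval (x : laur) : x != 0 ->
  exists v, lf x v != 0 /\ vanish (lf x) v.
Proof.
move=> /laur_neq0 [i hi].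
have Hx := lv x; set A := lbound (lf x) in Hx *; clearbody A.
have hiA : A <= i by case: (lerP A i) => // h; rewrite Hx ?eqxx in hi.
have ex : exists m : nat, lf x (A + m%:Z) != 0.
  by exists (absz (i - A)%R); have -> : A + (absz (i - A)%R)%:Z = i by lia.
case: (ex_minnP ex) => m hm hmin.
exists (A + m%:Z); split => // j hj.
case: (ltrP j A) => hjA; first exact: Hx.
have hm' : (absz (j - A)%R < m)%N by lia.
apply/eqP; apply: contraTT hm' => hne; rewrite -leqNgt; apply: hmin.
by have -> : A + (absz (j - A)%R)%:Z = j by lia.
Qed.

Lemma linv_ex (x : laur) : x != 0 -> exists y : laur, y * x = 1.
Proof.
move=> /lval [v [hv Hv]].
pose f (j : nat) := lf x (v + j%:Z).
have f0 : f 0%N != 0 by rewrite /f addr0.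
pose yf (i : int) := if - v <= i then bser f (absz (i + v)%R) else 0.
have Hy : vanish yf (- v) by move=> i hi; rewrite /yf; case: ifP => //; lia.
exists (Laur (vanish_laurent Hy)); apply: laur_eq; apply: funext => n /=.
rewrite (lmul_lsum _ Hy Hv) /lsum big_cpred.
have -> : n - - v - v = n by ring.
case: n => [m|m]; last by [].
rewrite /= /pcoef coef1 -(bser_eq m f0) /=.
apply: eq_bigr => j _; rewrite /yf.
move: (ltn_ord j); move: (nat_of_ord j) => jj hjj.
have -> : - v <= - v + jj%:Z by lia.
congr (bser f _ * _); first by lia.
by rewrite /f; congr (lf x _); lia.
Qed.

Definition linv (x : laur) : laur :=
  match excluded_middle_informative (exists y : laur, y * x = 1) with
  | left H => proj1_sig (constructive_indefinite_description _ H)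
  | right _ => 0
  end.

Lemma linv_mul (x : laur) : x != 0 -> linv x * x = 1.
Proof.
move=> hx; rewrite /linv; case: excluded_middle_informative => [H|H].
  by case: (constructive_indefinite_description _ H).
by exfalso; apply: H; apply: linv_ex.
Qed.

Lemma linv0 : linv 0 = 0.
Proof.
rewrite /linv; case: excluded_middle_informative => // H; exfalso.
by case: H => y; rewrite mulr0 => /eqP; rewrite eq_sym oner_eq0.
Qed.

HB.instance Definition _ := GRing.ComNzRing_isField.Build laur linv_mul linv0.

End Laurent.

Lemma frac_rep (R : idomainType) (x : {fraction R}) :
  exists pq : R * R, pq.2 != 0 /\ x = FracField.tofrac pq.1 / FracField.tofrac pq.2.
Proof.
elim/quotW: x => r.
exists (r.1, r.2); split; first exact: denom_ratioP.
rewrite -[RHS]/(FracField.mul _ _).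
unlock FracField.tofrac.
rewrite -[GRing.inv _]/(FracField.inv _).
rewrite !piE.
apply/eqmodP; rewrite /= FracField.equivfE /FracField.mulf /FracField.invf.
have h2 := denom_ratioP r.
rewrite !numden_Ratio ?oner_eq0 ?mulf_neq0 ?oner_eq0 //.
by rewrite !mulr1 !mul1r mulrC.
Qed.

Section Emb.
Variable k : fieldType.
Local Notation L := (laur k).
Local Notation K := (kx k).

Definition psi (p : {poly k}) : L := Laur (laurent_pcoef p).

Lemma psi_zmod : zmod_morphism psi.
Proof.
move=> p q; apply: laur_eq; apply: funext => -[n|n] //=.
by rewrite /ladd /pcoef coefB.
by rewrite /ladd /= oppr0 addr0.
Qed.

Lemma pcoef_vanish (p : {poly k}) : vanish (pcoef p) 0.
Proof. by move=> -[n|n]. Qed.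

Lemma trunc_poly (p : {poly k}) M : (size p <= M)%N -> trunc (pcoef p) 0 M = p.
Proof.
move=> hM; apply/polyP => j; rewrite coef_poly.
case: ifP => hj; first by rewrite add0r.
rewrite nth_default //; move/negbT: hj; rewrite -leqNgt => h; exact: leq_trans hM h.
Qed.

Lemma psi_monoid : monoid_morphism psi.
Proof.
split; first by [].
move=> p q; apply: laur_eq; apply: funext => n /=.
case: n => [m|m]; last by rewrite (lmul_neg (pcoef_vanish p) (pcoef_vanish q)).
pose M := maxn m.+1 (maxn (size p) (size q)).
rewrite (lmul_poly' (i := m) (M := M) (pcoef_vanish p) (pcoef_vanish q)); last 2 first.
- by rewrite !add0r.
- rewrite /M; lia.
rewrite !trunc_poly //; rewrite /M; lia.
Qed.

HB.instance Definition _ := GRing.isZmodMorphism.Build _ _ psi psi_zmod.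
HB.instance Definition _ := GRing.isMonoidMorphism.Build _ _ psi psi_monoid.

Lemma psi_eq0 p : (psi p == 0) = (p == 0).
Proof.
apply/eqP/eqP => [h|->]; last exact: rmorph0.
apply/polyP => j; rewrite coef0.
by have := congr1 (fun x => lf x j%:Z) h.
Qed.

Definition repr_of (x : K) : {poly k} * {poly k} :=
  proj1_sig (constructive_indefinite_description _ (frac_rep x)).

Lemma repr_ofP x : (repr_of x).2 != 0 /\
  x = polyF (repr_of x).1 / polyF (repr_of x).2.
Proof. by rewrite /repr_of; case: constructive_indefinite_description. Qed.

Definition phi (x : K) : L := psi (repr_of x).1 / psi (repr_of x).2.

Lemma polyF_eq0 (p : {poly k}) : (polyF p == 0) = (p == 0).
Proof. exact: tofrac_eq0. Qed.

End Emb.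

Section Emb2.
Variable k : fieldType.
Local Notation L := (laur k).
Local Notation K := (kx k).
Lemma polyFB (p q : {poly k}) : polyF (p - q) = polyF p - polyF q.
Proof. exact: rmorphB. Qed.
Lemma polyFM (p q : {poly k}) : polyF (p * q) = polyF p * polyF q.
Proof. exact: rmorphM. Qed.
Lemma polyF1 : polyF (1 : {poly k}) = 1.
Proof. exact: rmorph1. Qed.

Lemma phiE (p q : {poly k}) : q != 0 -> phi (polyF p / polyF q) = psi p / psi q.
Proof.
move=> hq; rewrite /phi; case: (repr_ofP (polyF p / polyF q)).
move: (repr_of _) => [p' q'] /= hq' e.
have hqF : polyF q != 0 by rewrite polyF_eq0.
have hqF' : polyF q' != 0 by rewrite polyF_eq0.
move/eqP: e; rewrite (eqr_div _ _ hqF hqF') -!rmorphM /= => /eqP e.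
have e2 : p * q' = p' * q by apply/eqP; rewrite -tofrac_eq; apply/eqP.
have hpq : psi q != 0 by rewrite psi_eq0.
have hpq' : psi q' != 0 by rewrite psi_eq0.
apply/eqP; rewrite (eqr_div _ _ hpq' hpq) -!rmorphM /=.
by rewrite e2.
Qed.

Lemma phi_polyF (p : {poly k}) : phi (polyF p) = psi p.
Proof.
have -> : polyF p = polyF p / polyF 1 by rewrite polyF1 divr1.
by rewrite (phiE _ (oner_neq0 _)) rmorph1 divr1.
Qed.

Lemma phi_zmod : zmod_morphism (@phi k).
Proof.
move=> x y.
case: (repr_ofP x); move: (repr_of x) => [p q] /= hq ->.
case: (repr_ofP y); move: (repr_of y) => [p' q'] /= hq' ->.
have hqF : polyF q != 0 by rewrite polyF_eq0.
have hqF' : polyF q' != 0 by rewrite polyF_eq0.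
have -> : polyF p / polyF q - polyF p' / polyF q' =
          polyF (p * q' - p' * q) / polyF (q * q').
  by rewrite polyFB !polyFM -mulNr (addf_div _ _ hqF hqF') mulNr.
have hpq : psi q != 0 by rewrite psi_eq0.
have hpq' : psi q' != 0 by rewrite psi_eq0.
rewrite (phiE _ (mulf_neq0 hq hq')) (phiE _ hq) (phiE _ hq') rmorphB !rmorphM /=.
by rewrite -[in RHS]mulNr (addf_div _ _ hpq hpq') mulNr.
Qed.

Lemma phi_monoid : monoid_morphism (@phi k).
Proof.
split.
  have -> : (1 : K) = polyF 1 by rewrite polyF1.
  by rewrite phi_polyF rmorph1.
move=> x y.
case: (repr_ofP x); move: (repr_of x) => [p q] /= hq ->.
case: (repr_ofP y); move: (repr_of y) => [p' q'] /= hq' ->.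
have -> : polyF p / polyF q * (polyF p' / polyF q') =
          polyF (p * p') / polyF (q * q').
  by rewrite !polyFM mulf_div.
rewrite (phiE _ (mulf_neq0 hq hq')) (phiE _ hq) (phiE _ hq') !rmorphM /=.
by rewrite mulf_div.
Qed.

HB.instance Definition _ := GRing.isZmodMorphism.Build _ _ (@phi k) phi_zmod.
HB.instance Definition _ := GRing.isMonoidMorphism.Build _ _ (@phi k) phi_monoid.

Lemma embR_phi (f : K) (e : int -> k) : embR f e <-> e = lf (phi f).
Proof.
split.
  move=> [He [p [q [hq [hf he]]]]].
  have hpq : psi q != 0 by rewrite psi_eq0.
  have E : Laur He * psi q = psi p by apply: laur_eq.
  by rewrite hf (phiE _ hq) -E (mulfK hpq).
move=> ->; split; first exact: lfP.
case: (repr_ofP f); move: (repr_of f) => [p q] /= hq hf.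
exists p, q; split; first exact: hq; split; first exact: hf.
have hpq : psi q != 0 by rewrite psi_eq0.
have : phi f * psi q = psi p by rewrite hf (phiE _ hq) (divfK hpq).
by move/(congr1 (@lf k)).
Qed.

End Emb2.

Section ISide.
Variable k : fieldType.
Local Notation L := (laur k).
Local Notation K := (kx k).
Local Notation phim A := (map_mx (@phi k) A).

Definition Irel n m (S : krel k n m) (U : 'rV[L]_n) (V : 'rV[L]_m) : Prop :=
  exists (a1 : 'rV[K]_n) (a2 : 'rV[K]_m), S a1 a2 /\
  exists N (D1 : 'M[K]_(N, n)) (D2 : 'M[K]_(N, m)) (lam : 'rV[L]_N),
    (forall i, S (a1 + row i D1) (a2 + row i D2)) /\
    U = phim a1 + lam *m phim D1 /\ V = phim a2 + lam *m phim D2.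

Definition Aff n m (S : krel k n m) : Prop :=
  forall x1 y1 x2 y2 x3 y3 (t : K), S x1 y1 -> S x2 y2 -> S x3 y3 ->
    S (x1 + t *: (x2 - x3)) (y1 + t *: (y2 - y3)).

Definition flip n m (S : krel k n m) : krel k m n := fun x y => S y x.

Lemma Irel_flip n m (S : krel k n m) U V : Irel S U V <-> Irel (flip S) V U.
Proof.
split.
  move=> [a1 [a2 [hS [N [D1 [D2 [lam [hr [hU hV]]]]]]]]].
  by exists a2, a1; split => //; exists N, D2, D1, lam.
move=> [a1 [a2 [hS [N [D1 [D2 [lam [hr [hU hV]]]]]]]]].
by exists a2, a1; split => //; exists N, D2, D1, lam.
Qed.

Lemma Aff_flip n m (S : krel k n m) : Aff S -> Aff (flip S).
Proof. by move=> H x1 y1 x2 y2 x3 y3 t h1 h2 h3; apply: H. Qed.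

Lemma Aff_graph n m (S : krel k n m) (M : 'M[K]_(n, m)) (c : 'rV[K]_m) :
  (forall u v, S u v <-> v = u *m M + c) -> Aff S.
Proof.
move=> HS x1 y1 x2 y2 x3 y3 t /HS -> /HS -> /HS ->; apply/HS.
have -> : x2 *m M + c - (x3 *m M + c) = (x2 - x3) *m M.
  by rewrite mulmxBl opprD addrACA subrr addr0.
by rewrite [in RHS]mulmxDl -scalemxAl addrAC.
Qed.

Lemma Irel_graph n m (S : krel k n m) (M : 'M[K]_(n, m)) (c : 'rV[K]_m) U V :
  (forall u v, S u v <-> v = u *m M + c) ->
  Irel S U V <-> V = U *m phim M + phim c.
Proof.
move=> HS; split.
  move=> [a1 [a2 [/HS ha [N [D1 [D2 [lam [hr [-> ->]]]]]]]]].
  have hD : D2 = D1 *m M.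
    apply/row_matrixP => i; rewrite row_mul.
    have := hr i; move/HS; rewrite ha mulmxDl => /eqP.
    move/eqP => h; apply: (addIr c); apply: (addrI (a1 *m M)); by rewrite !addrA -h addrAC.
  rewrite ha hD !map_mxD map_mxM mulmxDl map_mxM mulmxA.
  by rewrite addrAC.
move=> ->; exists 0, c; split; first by apply/HS; rewrite mul0mx add0r.
exists n, 1%:M, M, U; split.
  by move=> i; apply/HS; rewrite add0r -row_mul mul1mx addrC.
by rewrite map_mx0 add0r map_mx1 mulmx1 addrC.
Qed.

Lemma Irel_cograph n m (S : krel k n m) (M : 'M[K]_(m, n)) (c : 'rV[K]_n) U V :
  (forall u v, S u v <-> u = v *m M + c) ->
  Irel S U V <-> U = V *m phim M + phim c.
Proof.
move=> HS; rewrite Irel_flip; apply: Irel_graph => u v; exact: HS.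
Qed.

Lemma Aff_comb n m (S : krel k n m) a1 a2 N (D1 : 'M[K]_(N, n)) (D2 : 'M[K]_(N, m)) :
  Aff S -> S a1 a2 -> (forall i, S (a1 + row i D1) (a2 + row i D2)) ->
  forall rho : 'rV[K]_N, S (a1 + rho *m D1) (a2 + rho *m D2).
Proof.
move=> HA hS hr rho; rewrite !mulmx_sum_row.
pose P x y := S (a1 + x) (a2 + y).
apply: (big_ind2 P).
- by rewrite /P !addr0.
- move=> y1 y2 z1 z2 h1 h2; have := HA _ _ _ _ _ _ 1 h1 h2 hS.
  by rewrite !scale1r (addrC a1 z1) (addrC a2 z2) !addrK -!addrA.
- move=> i _; have := HA _ _ _ _ _ _ (rho 0 i) hS (hr i) hS.
  by rewrite (addrC a1 (row i D1)) (addrC a2 (row i D2)) !addrK.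
Qed.

Lemma base_change N m (D : 'M[K]_(N, m)) (c : 'rV[K]_m) (y : 'rV[L]_N) :
  y *m phim D = phim c ->
  exists y0 : 'rV[K]_N, y0 *m D = c /\
    exists nu : 'rV[L]_N, y = phim y0 + nu *m phim (kermx D).
Proof.
move=> hy.
have : (phim c <= phim D)%MS by apply/submxP; exists y.
rewrite map_submx => /submxP [y0 hy0].
exists y0; split; first by [].
have : ((y - phim y0) <= kermx (phim D))%MS.
  by apply/sub_kermxP; rewrite mulmxBl hy -map_mxM -hy0 subrr.
rewrite -map_kermx => /submxP [nu hnu].
by exists nu; rewrite -hnu addrC subrK.
Qed.

End ISide.

Section MxHelp.
Variable R : comNzRingType.
Lemma lsubD m n1 n2 (A B : 'M[R]_(m, n1 + n2)) : lsubmx (A + B) = lsubmx A + lsubmx B.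
Proof. by apply/matrixP => i j; rewrite !mxE. Qed.
Lemma rsubD m n1 n2 (A B : 'M[R]_(m, n1 + n2)) : rsubmx (A + B) = rsubmx A + rsubmx B.
Proof. by apply/matrixP => i j; rewrite !mxE. Qed.
Lemma lsubZ m n1 n2 (a : R) (A : 'M[R]_(m, n1 + n2)) : lsubmx (a *: A) = a *: lsubmx A.
Proof. by apply/matrixP => i j; rewrite !mxE. Qed.
Lemma rsubZ m n1 n2 (a : R) (A : 'M[R]_(m, n1 + n2)) : rsubmx (a *: A) = a *: rsubmx A.
Proof. by apply/matrixP => i j; rewrite !mxE. Qed.
Lemma lsubB m n1 n2 (A B : 'M[R]_(m, n1 + n2)) : lsubmx (A - B) = lsubmx A - lsubmx B.
Proof. by apply/matrixP => i j; rewrite !mxE. Qed.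
Lemma rsubB m n1 n2 (A B : 'M[R]_(m, n1 + n2)) : rsubmx (A - B) = rsubmx A - rsubmx B.
Proof. by apply/matrixP => i j; rewrite !mxE. Qed.
Lemma row_lsub m n1 n2 i (A : 'M[R]_(m, n1 + n2)) : row i (lsubmx A) = lsubmx (row i A).
Proof. by apply/matrixP => i' j; rewrite !mxE. Qed.
Lemma row_rsub m n1 n2 i (A : 'M[R]_(m, n1 + n2)) : row i (rsubmx A) = rsubmx (row i A).
Proof. by apply/matrixP => i' j; rewrite !mxE. Qed.
Lemma lsub0 m n1 n2 : lsubmx (0 : 'M[R]_(m, n1 + n2)) = 0.
Proof. by apply/matrixP => i j; rewrite !mxE. Qed.
Lemma rsub0 m n1 n2 : rsubmx (0 : 'M[R]_(m, n1 + n2)) = 0.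
Proof. by apply/matrixP => i j; rewrite !mxE. Qed.
Lemma zmod_aux (V : zmodType) (P X Q Y : V) : P + X = Q + Y -> X - Y = Q - P.
Proof. by move=> e; apply/eqP; rewrite subr_eq addrAC -e addrAC subrr add0r. Qed.
End MxHelp.

Section ISide2.
Variable k : fieldType.
Local Notation L := (laur k).
Local Notation K := (kx k).
Local Notation phim A := (map_mx (@phi k) A).

Definition seqrel n m l (S : krel k n m) (T : krel k m l) : krel k n l :=
  fun u v => exists w, S u w /\ T w v.
Definition parrel n1 m1 n2 m2 (S : krel k n1 m1) (T : krel k n2 m2) :
  krel k (n1 + n2) (m1 + m2) :=
  fun u v => S (lsubmx u) (lsubmx v) /\ T (rsubmx u) (rsubmx v).

Lemma Aff_seq n m l (S : krel k n m) (T : krel k m l) :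
  Aff S -> Aff T -> Aff (seqrel S T).
Proof.
move=> HS HT x1 y1 x2 y2 x3 y3 t [w1 [h1 h1']] [w2 [h2 h2']] [w3 [h3 h3']].
exists (w1 + t *: (w2 - w3)); split; [exact: HS | exact: HT].
Qed.

Lemma Aff_par n1 m1 n2 m2 (S : krel k n1 m1) (T : krel k n2 m2) :
  Aff S -> Aff T -> Aff (parrel S T).
Proof.
move=> HS HT x1 y1 x2 y2 x3 y3 t [h1 h1'] [h2 h2'] [h3 h3'].
split; rewrite ?lsubD ?rsubD ?lsubZ ?rsubZ ?lsubB ?rsubB; [exact: HS | exact: HT].
Qed.

Lemma Irel_par n1 m1 n2 m2 (S : krel k n1 m1) (T : krel k n2 m2) U V :
  Irel (parrel S T) U V <->
  Irel S (lsubmx U) (lsubmx V) /\ Irel T (rsubmx U) (rsubmx V).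
Proof.
split.
  move=> [a1 [a2 [[hS hT] [N [D1 [D2 [lam [hr [hU hV]]]]]]]]].
  split.
    exists (lsubmx a1), (lsubmx a2); split; first exact: hS.
    exists N, (lsubmx D1), (lsubmx D2), lam; split.
      by move=> i; rewrite !row_lsub -!lsubD; case: (hr i).
    by rewrite hU hV !lsubD -!mulmx_lsub -!map_lsubmx.
  exists (rsubmx a1), (rsubmx a2); split; first exact: hT.
  exists N, (rsubmx D1), (rsubmx D2), lam; split.
    by move=> i; rewrite !row_rsub -!rsubD; case: (hr i).
  by rewrite hU hV !rsubD -!mulmx_rsub -!map_rsubmx.
move=> [[a1 [a2 [hS [N [D1 [D2 [lam [hr [hU hV]]]]]]]]]
        [b1 [b2 [hT [M [E1 [E2 [mu [hr' [hU' hV']]]]]]]]]].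
exists (row_mx a1 b1), (row_mx a2 b2); split.
  by split; rewrite ?row_mxKl ?row_mxKr.
exists (N + M)%N, (col_mx (row_mx D1 0) (row_mx 0 E1)),
  (col_mx (row_mx D2 0) (row_mx 0 E2)), (row_mx lam mu); split.
  move=> i; case: (split_ordP i) => j ->.
    rewrite !rowKu !row_row_mx !row0 !add_row_mx !addr0.
    by split; rewrite ?row_mxKl ?row_mxKr; [exact: hr | exact: hT].
  rewrite !rowKd !row_row_mx !row0 !add_row_mx !addr0.
  by split; rewrite ?row_mxKl ?row_mxKr; [exact: hS | exact: hr'].
split.
  rewrite -[U]hsubmxK hU hU' !map_row_mx map_col_mx !map_row_mx !map_mx0.
  by rewrite mul_row_col !mul_mx_row !mulmx0 add_row_mx !add_row_mx !addr0 !add0r.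
rewrite -[V]hsubmxK hV hV' !map_row_mx map_col_mx !map_row_mx !map_mx0.
by rewrite mul_row_col !mul_mx_row !mulmx0 add_row_mx !add_row_mx !addr0 !add0r.
Qed.

End ISide2.

Section ISide3.
Variable k : fieldType.
Local Notation L := (laur k).
Local Notation K := (kx k).
Local Notation phim A := (map_mx (@phi k) A).

Lemma Irel_seq n m l (S : krel k n m) (T : krel k m l) U V :
  Aff S -> Aff T ->
  Irel (seqrel S T) U V <-> exists W, Irel S U W /\ Irel T W V.
Proof.
move=> HS HT; split.
  move=> [a1 [a2 [[am [ham1 ham2]] [N [D1 [D2 [lam [hr [hU hV]]]]]]]]].
  have hw : forall i, {w | S (a1 + row i D1) w /\ T w (a2 + row i D2)}.
    by move=> i; apply: cid; exact: (hr i).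
  pose Dm := \matrix_(i < N) (sval (hw i) - am).
  exists (phim am + lam *m phim Dm); split.
    exists a1, am; split; first exact: ham1.
    exists N, D1, Dm, lam; split; last by split.
    by move=> i; rewrite rowK (addrC am) subrK; case: (svalP (hw i)).
  exists am, a2; split; first exact: ham2.
  exists N, Dm, D2, lam; split; last by split.
  by move=> i; rewrite rowK (addrC am) subrK; case: (svalP (hw i)).
move=> [W [[a1 [a2 [hS [N [D1 [D2 [lam [hr [hU hW]]]]]]]]]
           [b1 [b2 [hT [M [E1 [E2 [mu [hr' [hW' hV]]]]]]]]]]].
pose D := col_mx D2 (- E1).
have hy : row_mx lam mu *m phim D = phim (b1 - a2).
  rewrite /D map_col_mx mul_row_col map_mxN mulmxN map_mxB.
  by apply: zmod_aux; rewrite -hW -hW'.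
case: (base_change hy) => y0 [hy0 [nu hnu]].
have claim : forall z : 'rV[K]_(N + M), z *m D = b1 - a2 ->
    seqrel S T (a1 + lsubmx z *m D1) (b2 + rsubmx z *m E2).
  move=> z hz.
  have hmid : a2 + lsubmx z *m D2 = b1 + rsubmx z *m E1.
    move: hz; rewrite -[z]hsubmxK /D mul_row_col mulmxN row_mxKl row_mxKr.
    move=> hz'; have e : lsubmx z *m D2 - rsubmx z *m E1 = b1 - a2 by [].
    have -> : lsubmx z *m D2 = b1 - a2 + rsubmx z *m E1 by rewrite -e subrK.
    by rewrite addrA (addrC a2) subrK.
  exists (a2 + lsubmx z *m D2); split; first exact: Aff_comb.
  by rewrite hmid; apply: Aff_comb.
pose Kr := kermx D.
exists (a1 + lsubmx y0 *m D1), (b2 + rsubmx y0 *m E2); split.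
  exact: claim.
exists (N + M)%N, (lsubmx Kr *m D1), (rsubmx Kr *m E2), nu; split.
  move=> i; rewrite !row_mul !row_lsub !row_rsub -!addrA -!mulmxDl -lsubD -rsubD.
  apply: claim; rewrite mulmxDl hy0.
  have : row i (Kr *m D) = 0 by rewrite mulmx_ker row0.
  by rewrite row_mul => ->; rewrite addr0.
have hlam : lam = phim (lsubmx y0) + nu *m phim (lsubmx Kr).
  by rewrite -[lam](row_mxKl lam mu) hnu lsubD -mulmx_lsub !map_lsubmx.
have hmu : mu = phim (rsubmx y0) + nu *m phim (rsubmx Kr).
  by rewrite -[mu](row_mxKr lam mu) hnu rsubD -mulmx_rsub !map_rsubmx.
split.
  by rewrite hU hlam !map_mxD !map_mxM mulmxDl mulmxA addrA.
by rewrite hV hmu !map_mxD !map_mxM mulmxDl mulmxA addrA.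
Qed.

End ISide3.

Section Gen.
Variable R : comNzRingType.
Definition swM : 'M[R]_2 := \matrix_(i, j) ((i == rev_ord j)%:R).

Lemma copyE (u : 'rV[R]_1) v : (v = \row_(j < 2) u 0 0) <-> v = u *m const_mx 1.
Proof.
suff -> : u *m const_mx 1 = \row_(j < 2) u 0 0 by [].
by apply/rowP => j; rewrite !mxE big_ord1 !mxE mulr1.
Qed.

Lemma addE (u : 'rV[R]_2) v :
  (v = \row_(j < 1) (u 0 ord0 + u 0 ord_max)) <-> v = u *m const_mx 1.
Proof.
suff -> : u *m const_mx 1 = \row_(j < 1) (u 0 ord0 + u 0 ord_max) by [].
apply/rowP => j; rewrite !mxE !big_ord_recl big_ord0 !mxE !mulr1 addr0.
by congr (u 0 _ + u 0 _); apply: val_inj.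
Qed.

Lemma swE (u : 'rV[R]_2) v :
  (v = \row_(j < 2) u 0 (rev_ord j)) <-> v = u *m swM.
Proof.
suff -> : u *m swM = \row_(j < 2) u 0 (rev_ord j) by [].
apply/rowP => j; rewrite !mxE !big_ord_recl big_ord0 !mxE addr0.
case: j => -[|[|j]] hj //.
  have e : rev_ord (Ordinal hj) = lift ord0 ord0 by apply: val_inj.
  by rewrite e eqxx /= mulr0 add0r mulr1.
have e : rev_ord (Ordinal hj) = ord0 by apply: val_inj.
by rewrite e eqxx /= mulr0 addr0 mulr1.
Qed.

Lemma ampE (s : R) (u : 'rV[R]_1) v : (v = s *: u) <-> v = u *m s%:M.
Proof. by rewrite mul_mx_scalar. Qed.

Lemma idE n (u : 'rV[R]_n) v : (v = u) <-> v = u *m 1%:M.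
Proof. by rewrite mulmx1. Qed.
End Gen.

Section LRdef.
Variable k : fieldType.
Local Notation L := (laur k).
Local Notation K := (kx k).
Local Notation phim A := (map_mx (@phi k) A).

Definition iota_k (a : k) : K := polyF a%:P.
Lemma iota_zmod : zmod_morphism iota_k.
Proof. by move=> a b; rewrite /iota_k polyCB polyFB. Qed.
Lemma iota_monoid : monoid_morphism iota_k.
Proof. by split; [rewrite /iota_k polyF1 | move=> a b; rewrite /iota_k polyCM polyFM]. Qed.
HB.instance Definition _ := GRing.isZmodMorphism.Build _ _ iota_k iota_zmod.
HB.instance Definition _ := GRing.isMonoidMorphism.Build _ _ iota_k iota_monoid.

Local Notation im A := (map_mx iota_k A).

Definition grk n m (M0 : 'M[k]_(n, m)) (c0 : 'rV[k]_m) (U : 'rV[L]_n) (V : 'rV[L]_m) :=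
  V = U *m phim (im M0) + phim (im c0).

Definition grX (U V : 'rV[L]_1) := V = U *m phim ((polyF 'X)%:M : 'M[K]_1) + phim (0 : 'rV[K]_1).

Fixpoint LR n m (c : circ k n m) : 'rV[L]_n -> 'rV[L]_m -> Prop :=
  match c in circ _ n m return 'rV[L]_n -> 'rV[L]_m -> Prop with
  | CCopy => grk (const_mx 1) 0
  | CDisc => grk 0 0
  | CAmp r => grk r%:M 0
  | CReg => grX
  | CAdd => grk (const_mx 1) 0
  | CZero => grk 0 0
  | COne => grk 0 (const_mx 1)
  | CCopyOp => fun U V => grk (const_mx 1) 0 V U
  | CDiscOp => fun U V => grk 0 0 V U
  | CAmpOp r => fun U V => grk r%:M 0 V U
  | CRegOp => fun U V => grX V U
  | CAddOp => fun U V => grk (const_mx 1) 0 V U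
  | CZeroOp => fun U V => grk 0 0 V U
  | COneOp => fun U V => grk 0 (const_mx 1) V U
  | CId0 => grk 0 0
  | CId1 => grk 1%:M 0
  | CSw => grk (swM k) 0
  | CSeq _ _ _ c d => fun U V => exists W, LR c U W /\ LR d W V
  | CPar _ _ _ _ c d => fun U V => LR c (lsubmx U) (lsubmx V) /\ LR d (rsubmx U) (rsubmx V)
  end.

Lemma im_const n m (a : k) : im (const_mx a : 'M_(n, m)) = const_mx (iota_k a).
Proof. exact: map_const_mx. Qed.
Lemma im_swM : im (swM k) = swM K.
Proof. by apply/matrixP => i j; rewrite !mxE rmorph_nat. Qed.

Lemma gen_graph n m (S : krel k n m) (M : 'M[K]_(n, m)) (c : 'rV[K]_m) :
  (forall u v, S u v <-> v = u *m M + c) ->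
  Aff S /\ forall U V, Irel S U V <-> V = U *m phim M + phim c.
Proof. by move=> H; split; [apply: Aff_graph H | move=> U V; apply: Irel_graph]. Qed.

Lemma gen_cograph n m (S : krel k n m) (M : 'M[K]_(m, n)) (c : 'rV[K]_n) :
  (forall u v, S u v <-> u = v *m M + c) ->
  Aff S /\ forall U V, Irel S U V <-> U = V *m phim M + phim c.
Proof.
move=> H; split; last by move=> U V; apply: Irel_cograph.
apply: (Aff_flip (S := flip S)); apply: (Aff_graph (M := M) (c := c)) => x y; exact: H.
Qed.

Lemma Iside n m (c : circ k n m) :
  Aff (denot c) /\ forall U V, Irel (denot c) U V <-> LR c U V.
Proof.
elim: c.
- apply: gen_graph => u v /=; rewrite im_const rmorph1 map_mx0 addr0; exact: copyE.
- apply: gen_graph => u v /=; rewrite !map_mx0 mulmx0 addr0; split => // _; exact: thinmx0.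
- move=> r; apply: gen_graph => u v /=; rewrite map_scalar_mx map_mx0 addr0; exact: ampE.
- apply: gen_graph => u v /=; rewrite addr0; exact: ampE.
- apply: gen_graph => u v /=; rewrite im_const rmorph1 map_mx0 addr0; exact: addE.
- apply: gen_graph => u v /=; by rewrite !map_mx0 mulmx0 addr0.
- apply: gen_graph => u v /=; by rewrite map_mx0 mulmx0 add0r im_const rmorph1.
- apply: gen_cograph => u v /=; rewrite im_const rmorph1 map_mx0 addr0; exact: copyE.
- apply: gen_cograph => u v /=; rewrite !map_mx0 mulmx0 addr0; split => // _; exact: thinmx0.
- move=> r; apply: gen_cograph => u v /=; rewrite map_scalar_mx map_mx0 addr0; exact: ampE.
- apply: gen_cograph => u v /=; rewrite addr0; exact: ampE.
- apply: gen_cograph => u v /=; rewrite im_const rmorph1 map_mx0 addr0; exact: addE.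
- apply: gen_cograph => u v /=; by rewrite !map_mx0 mulmx0 addr0.
- apply: gen_cograph => u v /=; by rewrite map_mx0 mulmx0 add0r im_const rmorph1.
- apply: gen_graph => u v /=; rewrite !map_mx0 mulmx0 addr0; split => // _; exact: thinmx0.
- apply: gen_graph => u v /=; rewrite map_mx1 map_mx0 addr0; exact: idE.
- apply: gen_graph => u v /=; rewrite im_swM map_mx0 addr0; exact: swE.
- move=> n0 m0 l c [Ac Hc] d [Ad Hd]; split; first exact: Aff_seq.
  move=> U V; apply: (iff_trans (Irel_seq U V Ac Ad)) => /=.
  split=> -[W [h1 h2]]; exists W; split; by [apply/Hc | apply/Hd].
- move=> n1 m1 n2 m2 c [Ac Hc] d [Ad Hd]; split; first exact: Aff_par.
  move=> U V; apply: (iff_trans (Irel_par _ _ U V)) => /=.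
  by split=> -[h1 h2]; split; by [apply/Hc | apply/Hd].
Qed.

End LRdef.

Section Coef.
Variable k : fieldType.
Local Notation L := (laur k).
Local Notation K := (kx k).
Local Notation phim A := (map_mx (@phi k) A).
Local Notation im A := (map_mx (@iota_k k) A).

Definition cr n (U : 'rV[L]_n) (i : int) : 'rV[k]_n := \row_j lf (U 0 j) i.
Definition kap n m (U : 'rV[L]_n) (V : 'rV[L]_m) : trajectory k n m :=
  fun i => (cr U i, cr V i).

Lemma lf_add (x y : L) t : lf (x + y) t = lf x t + lf y t.
Proof. by []. Qed.
Lemma lf_0 t : lf (0 : L) t = 0.
Proof. by []. Qed.
Lemma lf_mul (x y : L) t : lf (x * y) t = lmul (lf x) (lf y) t.
Proof. by []. Qed.

Lemma lf_sum (I : finType) (F : I -> L) t :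
  lf (\sum_i F i) t = \sum_i lf (F i) t.
Proof. by apply: (big_morph (fun x : L => lf x t)) => //. Qed.

Lemma lf_psiC (a : k) (x : L) t : lf (x * psi a%:P) t = lf x t * a.
Proof.
rewrite mulrC lf_mul (lmul_lsum _ (pcoef_vanish _) (@lv _ x)) /lsum big_cpred.
case: lerP => h; last by rewrite (@lv _ x) ?mul0r //; lia.
rewrite big_ord_recl big1 ?addr0.
  by rewrite /pcoef /= coefC /= mulrC.
by move=> j _; rewrite add0r /pcoef /= coefC /= mul0r.
Qed.

Lemma lf_psiX (x : L) t : lf (x * psi 'X) t = lf x (t - 1).
Proof.
rewrite mulrC lf_mul (lmul_lsum _ (pcoef_vanish _) (@lv _ x)) /lsum big_cpred subr0.
set A := lbound (lf x); have Hx : vanish (lf x) A by exact: lv.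
clearbody A.
case: lerP => h; last by rewrite Hx //; lia.
rewrite big_ord_recl /pcoef /= coefX /= mul0r add0r.
case: (ltrP 0 (t - A)) => h2.
  have -> : absz (t - A)%R = (absz (t - A)%R).-1.+1 by lia.
  rewrite big_ord_recl big1 ?addr0.
    rewrite /= coefX /= mul1r; congr (lf x _); lia.
  by move=> j _ /=; rewrite coefX /= mul0r.
have -> : absz (t - A)%R = 0%N by lia.
by rewrite big_ord0 Hx //; lia.
Qed.

Lemma phi_iota (a : k) : phi (iota_k a) = psi a%:P.
Proof. exact: phi_polyF. Qed.

Lemma lf_psiC1 (a : k) t : lf (psi a%:P) t = a * one_at k t.
Proof.
case: t => [m|m] /=; last by rewrite mulr0.
rewrite /one_at coefC; case: m => [|m] /=; first by rewrite mulr1.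
by rewrite mulr0.
Qed.

Lemma cr_grk n m (M0 : 'M[k]_(n, m)) (c0 : 'rV[k]_m) (U : 'rV[L]_n) i :
  cr (U *m phim (im M0) + phim (im c0)) i = cr U i *m M0 + one_at k i *: c0.
Proof.
apply/rowP => j; rewrite /cr !mxE lf_add lf_sum; congr (_ + _).
  apply: eq_bigr => l _; rewrite !mxE phi_iota lf_psiC.
  by [].
by rewrite phi_iota lf_psiC1 mulrC.
Qed.


End Coef.

Section Op1.
Variable k : fieldType.
Local Notation L := (laur k).
Local Notation K := (kx k).
Local Notation phim A := (map_mx (@phi k) A).
Local Notation im A := (map_mx (@iota_k k) A).

Lemma cr_inj n (U V : 'rV[L]_n) : (forall i, cr U i = cr V i) -> U = V.
Proof.
move=> h; apply/rowP => j; apply: laur_eq; apply: funext => i.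
by move: (h i) => /matrixP /(_ 0 j); rewrite !mxE.
Qed.

Lemma grk_cr n m (M0 : 'M[k]_(n, m)) (c0 : 'rV[k]_m) U V :
  grk M0 c0 U V <-> forall i, cr V i = cr U i *m M0 + one_at k i *: c0.
Proof.
split; first by move=> -> i; rewrite cr_grk.
by move=> h; apply: cr_inj => i; rewrite cr_grk h.
Qed.

Lemma cr_X (U : 'rV[L]_1) i :
  cr (U *m phim ((polyF 'X)%:M : 'M[K]_1) + phim (0 : 'rV[K]_1)) i = cr U (i - 1).
Proof.
apply/rowP => j; rewrite /cr !mxE big_ord1 !mxE !ord1 eqxx mulr1n phi_polyF rmorph0 addr0.
by rewrite lf_psiX.
Qed.

Lemma grX_cr (U V : 'rV[L]_1) : grX U V <-> forall i, cr V i = cr U (i - 1).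
Proof.
split; first by move=> -> i; rewrite cr_X.
by move=> h; apply: cr_inj => i; rewrite cr_X h.
Qed.

Lemma cr_bound n (U : 'rV[L]_n) : exists N, forall i, i < N -> cr U i = 0.
Proof.
pose b j := lbound (lf (U 0 j)).
exists (- \sum_j `|b j|) => i hi; apply/rowP => j; rewrite !mxE.
apply: (@lv _ (U 0 j)).
have hj : `|b j| <= \sum_l `|b l| by rewrite (bigD1 j) //= lerDl sumr_ge0.
rewrite -/(b j); move: hj hi; set s := \sum_l _; move=> hj hi.
have : - `|b j| <= b j by apply: lerNnormlW.
lia.
Qed.

Lemma traj_kap n m (s : trajectory k n m) t :
  (forall i, i < t -> s i = (0, 0)) -> exists U V, s = kap U V.
Proof.
move=> hz.
have h1 : forall j, laurent (fun i => (s i).1 0 j).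
  by move=> j; exists t => i hi; rewrite hz // mxE.
have h2 : forall j, laurent (fun i => (s i).2 0 j).
  by move=> j; exists t => i hi; rewrite hz // mxE.
exists (\row_j Laur (h1 j)), (\row_j Laur (h2 j)).
apply: funext => i; rewrite /kap /cr.
by rewrite [LHS]surjective_pairing; congr pair; apply/rowP => j; rewrite !mxE.
Qed.

Lemma kapE n m (U : 'rV[L]_n) (V : 'rV[L]_m) i : kap U V i = (cr U i, cr V i).
Proof. by []. Qed.

Lemma op_gen n m (c : circ k n m) (P : int -> 'rV[k]_n -> 'rV[k]_m -> Prop)
  (R : 'rV[L]_n -> 'rV[L]_m -> Prop) :
  (forall i s u v s', @step k i _ _ c s u v s' <-> P i u v) ->
  (forall i, i < 0 -> P i 0 0) ->
  (forall U V, R U V <-> forall i, P i (cr U i) (cr V i)) ->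
  forall s, op_sem c s <-> exists U V, R U V /\ s = kap U V.
Proof.
move=> hs h0 hR s; split.
  move=> [t [st [ht [hst [hstep hz]]]]].
  case: (traj_kap hz) => U [V e]; exists U, V; split; last exact: e.
  apply/hR => i.
  have ei : s i = (cr U i, cr V i) by rewrite e.
  case: (ltrP i t) => hi.
    have := hz i hi; rewrite ei => -[-> ->]; apply: h0; lia.
  by have := hstep i hi; rewrite ei /= => /hs.
move=> [U [V [hUV ->]]].
case: (cr_bound U) => NU hU; case: (cr_bound V) => NV hV.
exists (Num.min (Num.min NU NV) 0), (fun _ => init c); split; first by lia.
split; first by [].
split.
  by move=> i _; apply/hs; exact: (proj1 (hR U V) hUV i).
by move=> i hi; rewrite kapE hU ?hV //; lia.
Qed.

Lemma const11 (R : nzRingType) (u : 'rV[R]_1) : const_mx (u 0 0) = u.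
Proof. by apply/rowP => j; rewrite mxE ord1. Qed.

End Op1.

Section Op2.
Variable k : fieldType.
Local Notation L := (laur k).
Local Notation K := (kx k).
Local Notation phim A := (map_mx (@phi k) A).

Lemma one_at_neg i : i < 0 -> one_at k i = 0.
Proof. by move=> h; rewrite /one_at; case: eqP => // e; lia. Qed.

Lemma init_step n m (c : circ k n m) i : i < 0 -> @step k i _ _ c (init c) 0 0 (init c).
Proof.
move=> hi; elim: c => /=.
- by apply/rowP => j; rewrite !mxE.
- by [].
- by move=> r; rewrite scaler0.
- by split; [apply/rowP => j; rewrite !mxE | rewrite mxE].
- by apply/rowP => j; rewrite !mxE addr0.
- by [].
- by rewrite one_at_neg //; apply/rowP => j; rewrite !mxE.
- by apply/rowP => j; rewrite !mxE.
- by [].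
- by move=> r; rewrite scaler0.
- by split; [apply/rowP => j; rewrite !mxE | rewrite mxE].
- by apply/rowP => j; rewrite !mxE addr0.
- by [].
- by rewrite one_at_neg //; apply/rowP => j; rewrite !mxE.
- by [].
- by [].
- by apply/rowP => j; rewrite !mxE.
- by move=> n0 m0 l c Hc d Hd; exists 0; split.
- by move=> n1 m1 n2 m2 c Hc d Hd; rewrite !lsub0 !rsub0.
Qed.

Definition op_from n m (c : circ k n m) (s : trajectory k n m) (t : int) : Prop :=
  exists st : int -> stateT c, st t = init c /\
    (forall i : int, t <= i -> @step k i _ _ c (st i) (s i).1 (s i).2 (st (i + 1))) /\
    (forall i : int, i < t -> s i = (0, 0)).

Lemma op_semE n m (c : circ k n m) s : op_sem c s <-> exists t, t <= 0 /\ op_from c s t.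
Proof.
split; first by move=> [t [st [ht h]]]; exists t; split => //; exists st.
by move=> [t [ht [st h]]]; exists t, st.
Qed.

Lemma op_from_ext n m (c : circ k n m) s t t' :
  t' <= t -> t <= 0 -> op_from c s t -> op_from c s t'.
Proof.
move=> le1 le2 [st [h0 [hs hz]]].
exists (fun i => if i < t then init c else st i); split.
  by case: ifP => // h; have -> : t' = t by move/negbT: h; lia.
split; last by move=> i hi; apply: hz; lia.
move=> i hi; case: (ltrP i t) => hit.
  have -> : (if i + 1 < t then init c else st (i + 1)) = init c.
    by case: ifP => // h; have -> : i + 1 = t by move/negbT: h; lia.
  by rewrite (hz i hit) /=; apply: init_step; lia.
have -> : (i + 1 < t) = false by lia.
exact: hs.
Qed.

Lemma op_seq n m l (c : circ k n m) (d : circ k m l) s :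
  op_sem (CSeq c d) s <-> exists W : int -> 'rV[k]_m,
    op_sem c (fun i => ((s i).1, W i)) /\ op_sem d (fun i => (W i, (s i).2)).
Proof.
split.
  move=> [t [st [ht [h0 [hs hz]]]]].
  have hw : forall i, {w | (t <= i -> @step k i _ _ c (st i).1 (s i).1 w (st (i + 1)).1 /\
                                   @step k i _ _ d (st i).2 w (s i).2 (st (i + 1)).2) /\
                          (i < t -> w = 0)}.
    move=> i; apply: cid; case: (lerP t i) => hi.
      case: (hs i hi) => w hw; exists w; split; first by move=> _; exact: hw.
      by move=> h; exfalso; lia.
    by exists 0; split => // h; exfalso; lia.
  exists (fun i => sval (hw i)); split.
    exists t, (fun i => (st i).1); split => //; split; first by rewrite h0.
    split; first by move=> i hi; case: (svalP (hw i)) => /(_ hi) [].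
    move=> i hi; case: (svalP (hw i)) => _ /(_ hi) ->.
    by rewrite (hz i hi).
  exists t, (fun i => (st i).2); split => //; split; first by rewrite h0.
  split; first by move=> i hi; case: (svalP (hw i)) => /(_ hi) [].
  move=> i hi; case: (svalP (hw i)) => _ /(_ hi) ->.
  by rewrite (hz i hi).
move=> [W [/op_semE [tc [htc Hc]] /op_semE [td [htd Hd]]]].
have [stc [h0c [hsc hzc]]] := op_from_ext (t := tc) (t' := Num.min tc td) ltac:(lia) htc Hc.
have [std [h0d [hsd hzd]]] := op_from_ext (t := td) (t' := Num.min tc td) ltac:(lia) htd Hd.
exists (Num.min tc td), (fun i => (stc i, std i)); split; first by lia.
split; first by rewrite /= h0c h0d.
split.
  move=> i hi; exists (W i); split; [exact: (hsc i hi) | exact: (hsd i hi)].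
move=> i hi; have := hzc i hi; have := hzd i hi.
by case: (s i) => a b /= [_ ->] [-> _].
Qed.

Lemma op_par n1 m1 n2 m2 (c : circ k n1 m1) (d : circ k n2 m2) s :
  op_sem (CPar c d) s <->
  op_sem c (fun i => (lsubmx (s i).1, lsubmx (s i).2)) /\
  op_sem d (fun i => (rsubmx (s i).1, rsubmx (s i).2)).
Proof.
split.
  move=> [t [st [ht [h0 [hs hz]]]]]; split.
    exists t, (fun i => (st i).1); split => //; split; first by rewrite h0.
    split; first by move=> i hi; case: (hs i hi).
    by move=> i hi; rewrite (hz i hi) /= !lsub0.
  exists t, (fun i => (st i).2); split => //; split; first by rewrite h0.
  split; first by move=> i hi; case: (hs i hi).
  by move=> i hi; rewrite (hz i hi) /= !rsub0.
move=> [/op_semE [tc [htc Hc]] /op_semE [td [htd Hd]]].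
have [stc [h0c [hsc hzc]]] := op_from_ext (t := tc) (t' := Num.min tc td) ltac:(lia) htc Hc.
have [std [h0d [hsd hzd]]] := op_from_ext (t := td) (t' := Num.min tc td) ltac:(lia) htd Hd.
exists (Num.min tc td), (fun i => (stc i, std i)); split; first by lia.
split; first by rewrite /= h0c h0d.
split; first by move=> i hi; split; [exact: (hsc i hi) | exact: (hsd i hi)].
move=> i hi; have := hzc i hi; have := hzd i hi.
case: (s i) => a b /= [ea eb] [ea' eb'].
by rewrite -[a]hsubmxK -[b]hsubmxK ea eb ea' eb' !row_mx0.
Qed.

End Op2.

Section Op3.
Variable k : fieldType.
Local Notation L := (laur k).
Local Notation K := (kx k).
Local Notation phim A := (map_mx (@phi k) A).

Lemma op_grk n m (c : circ k n m) (M0 : 'M[k]_(n, m)) (c0 : 'rV[k]_m) :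
  (forall i s u v s', @step k i _ _ c s u v s' <-> v = u *m M0 + one_at k i *: c0) ->
  forall s, op_sem c s <-> exists U V, grk M0 c0 U V /\ s = kap U V.
Proof.
move=> hs; apply: (op_gen (P := fun i u v => v = u *m M0 + one_at k i *: c0)).
- exact: hs.
- by move=> i hi /=; rewrite one_at_neg // scale0r mul0mx addr0.
- by move=> U V; exact: grk_cr.
Qed.

Lemma op_cogrk n m (c : circ k n m) (M0 : 'M[k]_(m, n)) (c0 : 'rV[k]_n) :
  (forall i s u v s', @step k i _ _ c s u v s' <-> u = v *m M0 + one_at k i *: c0) ->
  forall s, op_sem c s <-> exists U V, grk M0 c0 V U /\ s = kap U V.
Proof.
move=> hs; apply: (op_gen (P := fun i u v => u = v *m M0 + one_at k i *: c0)).
- exact: hs.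
- by move=> i hi /=; rewrite one_at_neg // scale0r mul0mx addr0.
- by move=> U V; exact: grk_cr.
Qed.

Lemma op_reg s : op_sem (@CReg k) s <-> exists U V, grX U V /\ s = kap U V.
Proof.
split.
  move=> [t [st [ht [hst [hstep hz]]]]].
  case: (traj_kap hz) => U [V e]; exists U, V; split; last exact: e.
  have ei : forall i, s i = (cr U i, cr V i) by move=> i; rewrite e.
  have hst' : forall i, t <= i -> st i = cr U (i - 1) 0 0.
    move=> i hi; case: (ltrP t i) => hti.
      have := hstep (i - 1) ltac:(lia); rewrite ei /= subrK => -[_ ->].
      by [].
    have -> : i = t by lia.
    by rewrite hst; have := hz (t - 1) ltac:(lia); rewrite ei => -[-> _]; rewrite mxE.
  apply/grX_cr => i; case: (ltrP i t) => hi.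
    have := hz i hi; rewrite ei => -[_ ->].
    by have := hz (i - 1) ltac:(lia); rewrite ei => -[-> _].
  have := hstep i hi; rewrite ei /= => -[-> _].
  by rewrite hst' // const11.
move=> [U [V [/grX_cr hUV ->]]].
case: (cr_bound U) => NU hU; case: (cr_bound V) => NV hV.
exists (Num.min (Num.min NU NV) 0), (fun i => cr U (i - 1) 0 0); split; first by lia.
split; first by rewrite /= hU ?mxE //; lia.
split.
  by move=> i _; rewrite kapE /= hUV const11 addrK.
by move=> i hi; rewrite kapE hU ?hV //; lia.
Qed.

Lemma op_regop s : op_sem (@CRegOp k) s <-> exists U V, grX V U /\ s = kap U V.
Proof.
split.
  move=> [t [st [ht [hst [hstep hz]]]]].
  case: (traj_kap hz) => U [V e]; exists U, V; split; last exact: e.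
  have ei : forall i, s i = (cr U i, cr V i) by move=> i; rewrite e.
  have hst' : forall i, t <= i -> st i = cr V (i - 1) 0 0.
    move=> i hi; case: (ltrP t i) => hti.
      have := hstep (i - 1) ltac:(lia); rewrite ei /= subrK => -[_ ->].
      by [].
    have -> : i = t by lia.
    by rewrite hst; have := hz (t - 1) ltac:(lia); rewrite ei => -[_ ->]; rewrite mxE.
  apply/grX_cr => i; case: (ltrP i t) => hi.
    have := hz i hi; rewrite ei => -[-> _].
    by have := hz (i - 1) ltac:(lia); rewrite ei => -[_ ->].
  have := hstep i hi; rewrite ei /= => -[-> _].
  by rewrite hst' // const11.
move=> [U [V [/grX_cr hUV ->]]].
case: (cr_bound U) => NU hU; case: (cr_bound V) => NV hV.
exists (Num.min (Num.min NU NV) 0), (fun i => cr V (i - 1) 0 0); split; first by lia.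
split; first by rewrite /= hV ?mxE //; lia.
split.
  by move=> i _; rewrite kapE /= hUV const11 addrK.
by move=> i hi; rewrite kapE hU ?hV //; lia.
Qed.

End Op3.

Section Op4.
Variable k : fieldType.
Local Notation L := (laur k).
Local Notation K := (kx k).
Local Notation phim A := (map_mx (@phi k) A).

Lemma cr_lsub n1 n2 (U : 'rV[L]_(n1 + n2)) i : cr (lsubmx U) i = lsubmx (cr U i).
Proof. by apply/rowP => j; rewrite !mxE. Qed.
Lemma cr_rsub n1 n2 (U : 'rV[L]_(n1 + n2)) i : cr (rsubmx U) i = rsubmx (cr U i).
Proof. by apply/rowP => j; rewrite !mxE. Qed.

Lemma Oside n m (c : circ k n m) s :
  op_sem c s <-> exists U V, LR c U V /\ s = kap U V.
Proof.
elim: c s.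
- apply: op_grk => i s0 u v s1 /=; rewrite scaler0 addr0; exact: copyE.
- apply: op_grk => i s0 u v s1 /=; rewrite mulmx0 scaler0 addr0; split => // _; exact: thinmx0.
- move=> r; apply: op_grk => i s0 u v s1 /=; rewrite scaler0 addr0; exact: ampE.
- exact: op_reg.
- apply: op_grk => i s0 u v s1 /=; rewrite scaler0 addr0; exact: addE.
- by apply: op_grk => i s0 u v s1 /=; rewrite mulmx0 scaler0 addr0.
- apply: op_grk => i s0 u v s1 /=; rewrite mulmx0 add0r.
  have -> : one_at k i *: const_mx 1 = const_mx (one_at k i) :> 'rV[k]_1.
    by apply/rowP => j; rewrite !mxE mulr1.
  by [].
- apply: op_cogrk => i s0 u v s1 /=; rewrite scaler0 addr0; exact: copyE.
- apply: op_cogrk => i s0 u v s1 /=; rewrite mulmx0 scaler0 addr0; split => // _; exact: thinmx0.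
- move=> r; apply: op_cogrk => i s0 u v s1 /=; rewrite scaler0 addr0; exact: ampE.
- exact: op_regop.
- apply: op_cogrk => i s0 u v s1 /=; rewrite scaler0 addr0; exact: addE.
- by apply: op_cogrk => i s0 u v s1 /=; rewrite mulmx0 scaler0 addr0.
- apply: op_cogrk => i s0 u v s1 /=; rewrite mulmx0 add0r.
  have -> : one_at k i *: const_mx 1 = const_mx (one_at k i) :> 'rV[k]_1.
    by apply/rowP => j; rewrite !mxE mulr1.
  by [].
- apply: op_grk => i s0 u v s1 /=; rewrite mulmx0 scaler0 addr0; split => // _; exact: thinmx0.
- apply: op_grk => i s0 u v s1 /=; rewrite scaler0 addr0; exact: idE.
- apply: op_grk => i s0 u v s1 /=; rewrite scaler0 addr0; exact: swE.
- move=> n0 m0 l c IHc d IHd s; apply: (iff_trans (op_seq _ _ _)); split.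
    move=> [W [/IHc [U [W1 [h1 e1]]] /IHd [W2 [V [h2 e2]]]]].
    have eW : W1 = W2.
      apply: cr_inj => i.
      have := congr1 (fun f => f i) e1; have := congr1 (fun f => f i) e2.
      by rewrite !kapE => -[<- _] [_ <-].
    exists U, V; split; first by exists W1; split; last by rewrite eW.
    apply: funext => i; rewrite kapE.
    have := congr1 (fun f => f i) e1; have := congr1 (fun f => f i) e2.
    rewrite !kapE => -[_ <-] [<- _].
    by case: (s i).
  move=> [U [V [[W [h1 h2]] ->]]]; exists (fun i => cr W i); split.
    by apply/IHc; exists U, W.
  by apply/IHd; exists W, V.
- move=> n1 m1 n2 m2 c IHc d IHd s; apply: (iff_trans (op_par _ _ _)); split.
    move=> [/IHc [U1 [V1 [h1 e1]]] /IHd [U2 [V2 [h2 e2]]]].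
    exists (row_mx U1 U2), (row_mx V1 V2); split.
      by rewrite /= !row_mxKl !row_mxKr.
    apply: funext => i; rewrite kapE.
    have := congr1 (fun f => f i) e1; have := congr1 (fun f => f i) e2.
    rewrite !kapE => -[ea eb] [ea' eb'].
    rewrite [LHS]surjective_pairing; congr pair.
      rewrite -[LHS]hsubmxK -[RHS]hsubmxK -cr_lsub -cr_rsub row_mxKl row_mxKr.
      by rewrite ea ea'.
    rewrite -[LHS]hsubmxK -[RHS]hsubmxK -cr_lsub -cr_rsub row_mxKl row_mxKr.
    by rewrite eb eb'.
  move=> [U [V [[h1 h2] ->]]]; split.
    by apply/IHc; exists (lsubmx U), (lsubmx V); split => //; apply: funext => i; rewrite !kapE /= !cr_lsub.
  by apply/IHd; exists (rsubmx U), (rsubmx V); split => //; apply: funext => i; rewrite !kapE /= !cr_rsub.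
Qed.

End Op4.

Section Final.
Variable k : fieldType.
Local Notation L := (laur k).
Local Notation K := (kx k).
Local Notation phim A := (map_mx (@phi k) A).

Lemma kappa_iota n m (S : krel k n m) s :
  kappa_set (iota_rel S) s <-> exists U V, Irel S U V /\ s = kap U V.
Proof.
split.
  move=> [u [v [[a1 [a2 [hS [N [lam [l1 [l2 [hlam [hl [e1 [e2 [f1 [f2
    [he1 [he2 [hf1 [hf2 [hu hv]]]]]]]]]]]]]]]]]]] ->]].
  pose D1 := \matrix_(i < N) l1 i.
  pose D2 := \matrix_(i < N) l2 i.
  pose Lm := \row_(i < N) Laur (hlam i).
  exists (phim a1 + Lm *m phim D1), (phim a2 + Lm *m phim D2); split.
    exists a1, a2; split; first exact: hS.
    exists N, D1, D2, Lm; split; last by split.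
    move=> i; rewrite !rowK; case: (hl i) => s1 [s2 [hs [-> ->]]].
    by rewrite (addrC a1) subrK (addrC a2) subrK.
  apply: funext => t; rewrite /kappa kapE; congr pair; apply/rowP => j;
    rewrite !mxE ?hu ?hv /lcomb lf_add lf_sum; congr (_ + _).
  - by rewrite (proj1 (embR_phi _ _) (he1 j)).
  - by apply: eq_bigr => l _; rewrite !mxE lf_mul (proj1 (embR_phi _ _) (hf1 l j)).
  - by rewrite (proj1 (embR_phi _ _) (he2 j)).
  - by apply: eq_bigr => l _; rewrite !mxE lf_mul (proj1 (embR_phi _ _) (hf2 l j)).
move=> [U [V [[a1 [a2 [hS [N [D1 [D2 [lam [hr [hU hV]]]]]]]]] ->]]].
exists (fun j t => lf (U 0 j) t), (fun j t => lf (V 0 j) t); split; last first.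
  by apply: funext => t; rewrite /kappa kapE; congr pair; apply/rowP => j; rewrite !mxE.
exists a1, a2; split; first exact: hS.
exists N, (fun i => lf (lam 0 i)), (fun i => row i D1), (fun i => row i D2); split.
  by move=> i; exact: lfP.
split.
  move=> i; exists (a1 + row i D1), (a2 + row i D2); split; first exact: hr.
  by split; [rewrite (addrC a1) addrK | rewrite (addrC a2) addrK].
exists (fun j => lf (phi (a1 0 j))), (fun j => lf (phi (a2 0 j))),
  (fun i j => lf (phi (row i D1 0 j))), (fun i j => lf (phi (row i D2 0 j))).
split; first by move=> j; apply/embR_phi.
split; first by move=> j; apply/embR_phi.
split; first by move=> i j; apply/embR_phi.
split; first by move=> i j; apply/embR_phi.
split; apply: funext => j; apply: funext => t;
  rewrite /lcomb ?hU ?hV !mxE lf_add lf_sum; congr (_ + _);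
  by apply: eq_bigr => l _; rewrite !mxE lf_mul.
Qed.

End Final.

Unset Implicit Arguments.
Theorem theorem3 (k : fieldType) (n m : nat) (c : circ k n m) :
  op_sem c = kappa_set (iota_rel (denot c)).
Proof.
apply: funext => s; apply: propext.
apply: (iff_trans (Oside c s)); apply: iff_sym; apply: (iff_trans (kappa_iota _ s)).
split => -[U [V [h ->]]]; exists U, V; split => //; by apply/(proj2 (Iside c)).
Qed.
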